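(* For all $\vec v\in\hat N^n,\vec w\in\hat N^m$ with $n,m\ge1$, writing $\vec v=\vec v_l\vee\vec v_r$ and $\vec w=\vec w_l\vee\vec w_r$, the set $I=\{\vec u\in\hat N^{n+m}:\vec v\nearrow\vec w\le\vec u\le\vec v\nwarrow\vec w\}$ is the disjoint union of $I_1=\{\vec u:\ \vec v_l\vee(\vec v_r\nearrow\vec w)\le\vec u\le\vec v\nwarrow\vec w\}$ and $I_2=\{\vec u:\ \vec v\nearrow\vec w\le\vec u\le(\vec v\nwarrow\vec w_l)\vee\vec w_r\}$. Equivalently, $\vec v\star\vec w=\vec v_l\vee(\vec v_r\star\vec w)+(\vec v\star\vec w_l)\vee\vec w_r$, where $\vee$ is extended bilinearly, and $I_1$ (resp. $I_2$) is the set of trees appearing in the first (resp. second) summand.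
   Context: $\hat N^0=\{()\}$ (empty vector) and, for $n\ge1$, $\hat N^n$ is the set of names of planar rooted binary trees with $n$ internal vertices; every element of $\hat N^n$, $n\ge1$, is uniquely $\vec v_l\vee\vec v_r:=(\vec v_l,1,p+1+\vec v_r)$ with $\vec v_l\in\hat N^p,\vec v_r\in\hat N^q$, $p+q+1=n$, where $k+(w_1,\dots,w_q)=(w_1+k,\dots,w_q+k)$ (so $\vec v\vee()=(\vec v,1)$, $()\vee\vec v=(1,1+\vec v)$, $()\vee()=(1)$). For $\vec v\in\hat N^n,\vec w\in\hat N^m$: $\vec v\nearrow\vec w=(\vec v,n\triangleright w_1,\dots,n\triangleright w_m)$ with $n\triangleright a=a+n$ for $a\neq1$, $n\triangleright1=1$; $\vec v\nwarrow\vec w=(\vec v,n+\vec w)$; $()$ is a unit for both. Componentwise order $\le$. On $K\hat N^\infty_*=\bigoplus_{n\ge1}K\hat N^n$ ($K$ a field of characteristic zero), $\vec v\star\vec w$ is the sum of all $\vec t\in\hat N^{n+m}$ with $\vec v\nearrow\vec w\le\vec t\le\vec v\nwarrow\vec w$, and $()\star\vec v=\vec v\star()=\vec v$. *)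

(* Defs.v *)
From mathcomp Require Import all_boot.
Set Implicit Arguments. Unset Strict Implicit. Unset Printing Implicit Defensive.

Inductive tree := Leaf | Node of tree & tree.

Fixpoint internal (t : tree) : nat :=
  match t with Leaf => 0 | Node l r => (internal l + internal r).+1 end.

Definition shift (k : nat) (w : seq nat) : seq nat := map (fun a => a + k) w.

Definition vjoin (vl vr : seq nat) : seq nat := vl ++ 1 :: shift (size vl).+1 vr.

Fixpoint name (t : tree) : seq nat :=
  match t with Leaf => [::] | Node l r => vjoin (name l) (name r) end.

Definition Nhat (n : nat) (u : seq nat) : Prop :=
  exists t : tree, internal t = n /\ name t = u.

Definition tri (n a : nat) : nat := if a == 1 then 1 else a + n.

Definition nearrow (v w : seq nat) : seq nat := v ++ map (tri (size v)) w.
Definition nwarrow (v w : seq nat) : seq nat := v ++ shift (size v) w.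

Definition vle (u v : seq nat) : bool := (size u == size v) && all2 leq u v.

Definition tinterval (k : nat) (a b : seq nat) (u : seq nat) : Prop :=
  Nhat k u /\ vle a u /\ vle u b.

(* Main.v *)
Require Import Defs.
From mathcomp Require Import all_boot.
From mathcomp Require Import zify.
Set Implicit Arguments. Unset Strict Implicit.

Lemma all2_size (r : nat -> nat -> bool) s t : all2 r s t -> size s = size t.
Proof. by elim: s t => [|x s IH] [|y t] //= /andP[_ /IH ->]. Qed.

Lemma vleE s t : vle s t = all2 leq s t.
Proof.
rewrite /vle; case H: (all2 leq s t); last by rewrite andbF.
by rewrite (all2_size H) eqxx.
Qed.

Lemma all2_cat (r : nat -> nat -> bool) s1 s2 t1 t2 : size s1 = size t1 ->
  all2 r (s1 ++ s2) (t1 ++ t2) = all2 r s1 t1 && all2 r s2 t2.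
Proof.
elim: s1 t1 => [|x s IH] [|y t] //= [/IH ->]; by rewrite andbA.
Qed.

Lemma all2_refl s : all2 leq s s.
Proof. by elim: s => //= x s ->; rewrite leqnn. Qed.

Lemma all2_trans s t u : all2 leq s t -> all2 leq t u -> all2 leq s u.
Proof.
elim: s t u => [|x s IH] [|y t] [|z u] //= /andP[h1 h2] /andP[h3 h4].
by rewrite (leq_trans h1 h3) (IH _ _ h2 h4).
Qed.

Lemma all2_anti s t : all2 leq s t -> all2 leq t s -> s = t.
Proof.
elim: s t => [|x s IH] [|y t] //= /andP[h1 h2] /andP[h3 h4].
by rewrite (IH _ h2 h4); congr (_ :: _); apply/eqP; rewrite eqn_leq h1 h3.
Qed.

Lemma all2_all c s t : all2 leq s t -> all (leq c) s -> all (leq c) t.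
Proof.
elim: s t => [|x s IH] [|y t] //= /andP[h1 h2] /andP[h3 h4].
by rewrite (leq_trans h3 h1) (IH _ h2 h4).
Qed.

Lemma all2_map_mono (f g : nat -> nat) A : (forall z, f z <= g z) ->
  all2 leq (map f A) (map g A).
Proof. by move=> H; elim: A => //= z A ->; rewrite H. Qed.

Lemma all2_pw (f g : nat -> nat) (P : pred nat) A x :
  all2 leq (map f A) x -> all P x -> (forall z y, f z <= y -> P y -> g z <= y) ->
  all2 leq (map g A) x.
Proof.
move=> + + H; elim: A x => [|z A IH] [|y x] //= /andP[h1 h2] /andP[h3 h4].
by rewrite (H _ _ h1 h3) (IH _ h2 h4).
Qed.

Lemma all2_shift k s t : all2 leq (shift k s) (shift k t) = all2 leq s t.
Proof. by elim: s t => [|x s IH] [|y t] //=; rewrite leq_add2r IH. Qed.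

Lemma all2_splitl s1 s2 u : all2 leq (s1 ++ s2) u ->
  exists u1 u2, u = u1 ++ u2 /\ all2 leq s1 u1 /\ all2 leq s2 u2.
Proof.
move=> H; exists (take (size s1) u), (drop (size s1) u); split; first by rewrite cat_take_drop.
have Hs := all2_size H; move: H; rewrite -{1}(cat_take_drop (size s1) u) all2_cat.
  by case/andP.
by rewrite size_take -Hs size_cat; case: ifP => //; lia.
Qed.

Lemma unshift k Y : all (leq k) Y -> Y = shift k (map (subn^~ k) Y).
Proof.
elim: Y => //= y Y IH /andP[h1 h2]; by rewrite -IH // subnK.
Qed.

Lemma all_shift c k s : all (leq c) s -> all (leq (c + k)) (shift k s).
Proof. by elim: s => //= y s IH /andP[h1 h2]; rewrite leq_add2r h1 IH. Qed.

Lemma blk_squeeze k X1 d1 Y1 X2 d2 Y2 u :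
  size X1 = k -> size X2 = k ->
  all2 leq (X1 ++ d1 :: shift k.+1 Y1) u -> all2 leq u (X2 ++ d2 :: shift k.+1 Y2) ->
  exists X c Y, u = X ++ c :: shift k.+1 Y /\ all2 leq X1 X /\ all2 leq X X2 /\
     d1 <= c <= d2 /\ all2 leq Y1 Y /\ all2 leq Y Y2.
Proof.
move=> s1 s2 /all2_splitl [X [[|c Z] [-> [h1 /= h2]]]] //.
case/andP: h2 => h2 h3 h4.
have hz : all (leq k.+1) Z.
  apply: (all2_all h3); have := @all_shift 0 k.+1 Y1; rewrite add0n; apply.
  by elim: (Y1) {h3 h4}.
have EZ := unshift hz.
exists X, c, (map (subn^~ k.+1) Z).
move: h4; rewrite all2_cat; last by rewrite -(all2_size h1) s1 s2.
case/andP=> h4 /= /andP[h5 h6].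
rewrite -EZ; split => //; split => //; split => //; rewrite h2 h5; split => //.
by move: h3 h6; rewrite {1 2}EZ !all2_shift.
Qed.

Lemma blk_le X1 d1 Z1 X d Z : size X1 = size X ->
  all2 leq (X1 ++ d1 :: Z1) (X ++ d :: Z) = [&& all2 leq X1 X, d1 <= d & all2 leq Z1 Z].
Proof. by move=> h; rewrite all2_cat. Qed.

Lemma size_vjoin X Y : size (vjoin X Y) = size X + (size Y).+1.
Proof. by rewrite /vjoin size_cat /= size_map. Qed.

Lemma size_name t : size (name t) = internal t.
Proof. elim: t => //= l IHl r IHr; rewrite size_vjoin IHl IHr; lia. Qed.

Lemma all_map_leq c k s : all (leq c) s -> all (leq (c + k)) (shift k s).
Proof. exact: all_shift. Qed.

Lemma name_pos t : all (leq 1) (name t).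
Proof.
elim: t => //= l IHl r IHr; rewrite /vjoin all_cat IHl /=.
have := all_shift (size (name l)).+1 IHr; apply: sub_all => y; lia.
Qed.

Lemma nth_catL (s1 s2 : seq nat) i : i < size s1 -> nth 0 (s1 ++ s2) i = nth 0 s1 i.
Proof. by move=> h; rewrite nth_cat h. Qed.
Lemma nth_catR (s1 s2 : seq nat) i : size s1 <= i -> nth 0 (s1 ++ s2) i = nth 0 s2 (i - size s1).
Proof. by move=> h; rewrite nth_cat ltnNge h. Qed.

Lemma all_nth c (s : seq nat) i : all (leq c) s -> i < size s -> c <= nth 0 s i.
Proof. by move=> /(all_nthP 0) H /H. Qed.

Lemma root tl tr : let u := name (Node tl tr) in let k := size (name tl) in
  k < size u /\ nth 0 u k = 1 /\ forall i, k < i < size u -> k.+2 <= nth 0 u i.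
Proof.
move=> u k; rewrite /u /= /vjoin -/k; split; first by rewrite size_cat /=; lia.
split; first by rewrite nth_catR // subnn.
move=> i /andP[h1]; rewrite size_cat /= size_map => h2.
rewrite nth_catR; last lia.
have -> : i - k = (i - k.+1).+1 by lia.
rewrite /=.
have := all_shift k.+1 (name_pos tr); rewrite add1n => /all_nth; apply; rewrite size_map; lia.
Qed.

Lemma Nhat_size k u : Nhat k u -> size u = k.
Proof. by case=> t [<- <-]; rewrite size_name. Qed.

Lemma Nhat_vjoin i j X Y : Nhat i X -> Nhat j Y -> Nhat (i + j).+1 (vjoin X Y).
Proof. by case=> tl [<- <-] [tr [<- <-]]; exists (Node tl tr). Qed.

Lemma Nhat_split k X Y : Nhat k (vjoin X Y) -> all (leq 1) Y ->
  Nhat (size X) X /\ Nhat (size Y) Y.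
Proof.
case=> [[|tl tr]] [_ E] HY; first by move: E; rewrite /= /vjoin; case: X.
have [h0 [h1 h2]] := root tl tr.
rewrite E in h0 h1 h2.
set k' := size (name tl) in h0 h1 h2.
have Hk : k' = size X.
  case: (ltngtP k' (size X)) => // H.
  - have := h2 (size X); rewrite /vjoin nth_catR // subnn /= size_cat /=.
    move=> /(_ _) H'; have := H' ltac:(apply/andP; split; [exact H| lia]); lia.
  - move: h1; rewrite /vjoin nth_catR; last lia.
    have -> : k' - size X = (k' - (size X).+1).+1 by lia.
    rewrite /=.
    have := all_shift (size X).+1 HY; rewrite add1n => /all_nth Hn.
    have : (size X).+2 <= nth 0 (shift (size X).+1 Y) (k' - (size X).+1).
      apply: Hn; move: h0; rewrite size_vjoin size_map; lia.
    lia.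
move: E; rewrite /= /vjoin => /eqP; rewrite eqseq_cat // => /andP[/eqP E1 /eqP [E2]].
have Hk2 : size (name tl) = size X := Hk. rewrite Hk2 in E2.
have E3: name tr = Y.
  elim: (name tr) Y E2 {h0 h1 h2 HY} => [|x s IH] [|y t] //= [h /IH ->]; congr (_ :: _); lia.
split; [exists tl | exists tr]; by rewrite -?E1 -?E3 size_name.
Qed.

Lemma core t V R x c Z : name t = (vjoin V R ++ x) ++ c :: Z -> all (leq 1) R ->
  2 <= c -> c <= size (vjoin V R) + 1 ->
  all (leq (size (vjoin V R) + size x).+2) Z ->
  all (leq (size V).+2) x && ((size V).+2 <= c).
Proof.
set v := vjoin V R; set u := (v ++ x) ++ c :: Z.
move=> E HR Hc2 Hcn HZ.
pose p := size V. pose n := size v. pose a := size x.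
have sv : n = p + (size R).+1 by rewrite /n /v size_vjoin.
have su : size u = n + a + (size Z).+1 by rewrite /u size_cat [size (v ++ x)]size_cat.
have Fa : nth 0 u p = 1.
  by rewrite /u -catA nth_catL ?sv; [rewrite /v /vjoin nth_catR // subnn | lia].
have Fb : forall i, p < i < n -> p.+2 <= nth 0 u i.
  move=> i /andP[h1 h2]; rewrite /u -catA nth_catL // /v /vjoin nth_catR; last lia.
  have -> : i - p = (i - p.+1).+1 by lia.
  rewrite /=; have := all_shift p.+1 HR; rewrite add1n => /all_nth; apply.
  rewrite size_map; lia.
have Fc : forall j, j < a -> nth 0 u (n + j) = nth 0 x j.
  move=> j hj; rewrite /u -catA nth_catR; last lia.
  by rewrite nth_catL; [congr nth; lia | lia].
have Fd : nth 0 u (n + a) = c.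
  by rewrite /u nth_catR size_cat -/n -/a ?subnn //; lia.
have Fe : forall i, n + a < i < size u -> (n + a).+2 <= nth 0 u i.
  move=> i /andP[h1 h2]; rewrite /u nth_catR size_cat -/n -/a; last lia.
  have -> : i - (n + a) = (i - (n + a).+1).+1 by lia.
  rewrite /=; apply: all_nth => //; lia.
case: t E => [|tl tr] E; first by move: E => /(congr1 size); rewrite su /=; lia.
have [h0 [h1 h2]] := root tl tr.
rewrite E in h0 h1 h2.
set k := size (name tl) in h0 h1 h2.
have Hk : k = p.
  case: (ltngtP k p) => // H.
  - have := h2 p; rewrite Fa; move=> /(_ _) H'.
    have := H' ltac:(apply/andP; split; [exact H| lia]); lia.
  - case: (ltnP k n) => H2.
      have := Fb k; rewrite h1 => /(_ _) H'; have := H' ltac:(lia); lia.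
    case: (ltngtP k (n + a)) => H3.
    + have := h2 (n + a); rewrite Fd => /(_ _) H'; have := H' ltac:(lia); lia.
    + have := Fe k; rewrite h1 => /(_ _) H'; have := H' ltac:(lia); lia.
    + move: h1; rewrite H3 Fd; lia.
rewrite /p in Hk.
apply/andP; split.
  apply/(all_nthP 0) => j hj; rewrite -Fc //; move: (h2 (n + j)); lia.
rewrite -Fd; move: (h2 (n + a)); lia.
Qed.

Section Ids.
Variables (V R A B : seq nat).
Hypothesis HB : all (leq 1) B.
Let v := vjoin V R.
Let n := size v.

Lemma shift_eq k j s : k = j -> shift k s = shift j s.
Proof. by move=> ->. Qed.

Lemma E1 : nearrow v (vjoin A B) = nearrow v A ++ 1 :: shift (n + size A).+1 B.
Proof.
rewrite /nearrow /vjoin map_cat /= -catA /=; congr (_ ++ _ ++ _ :: _).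
rewrite /shift -map_comp; apply/eq_in_map => z hz /=.
have := allP HB z hz; rewrite /tri -/n; case: ifP => /eqP; lia.
Qed.

Lemma E1' : nearrow v (vjoin A B) = vjoin (nearrow v A) B.
Proof. by rewrite E1 /vjoin /nearrow size_cat size_map. Qed.

Lemma E2 : nwarrow v (vjoin A B) = nwarrow v A ++ (n + 1) :: shift (n + size A).+1 B.
Proof.
rewrite /nwarrow /vjoin /shift map_cat /= -catA /= -/n add1n addn1; congr (_ ++ _ ++ _ :: _).
rewrite -map_comp; apply/eq_map => z /=; lia.
Qed.

Lemma E3 : vjoin V (nearrow R (vjoin A B)) =
  vjoin V (nearrow R A) ++ (size V).+2 :: shift (n + size A).+1 B.
Proof.
rewrite /vjoin /nearrow /shift !map_cat /= -!catA /= -!catA /=.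
congr (_ ++ _ :: _ ++ _ ++ _ :: _).
rewrite -!map_comp; apply/eq_in_map => z hz /=.
have := allP HB z hz; rewrite /tri /n /v size_vjoin; case: ifP => /eqP; lia.
Qed.

Lemma E4 w : nwarrow v w = vjoin V (nwarrow R w).
Proof.
rewrite /nwarrow /vjoin /shift map_cat -catA /=; congr (_ ++ _ :: _ ++ _).
rewrite -map_comp; apply/eq_map => z /=; rewrite /n /v size_vjoin; lia.
Qed.

Lemma E5 : vjoin (nwarrow v A) B = nwarrow v A ++ 1 :: shift (n + size A).+1 B.
Proof. by rewrite /vjoin /nwarrow size_cat size_map. Qed.

Lemma E6 : vjoin V (nearrow R A) = v ++ map (fun z => tri (size R) z + (size V).+1) A.
Proof.
rewrite /vjoin /nearrow /shift map_cat -catA /= -map_comp; congr (_ ++ _ :: _ ++ _).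
Qed.

End Ids.

Lemma vjoin_pos X Y : all (leq 1) X -> all (leq 1) Y -> all (leq 1) (vjoin X Y).
Proof.
move=> hX hY; rewrite /vjoin all_cat hX /=.
have := all_shift (size X).+1 hY; apply: sub_all => y; lia.
Qed.

Lemma nearrow_pos X Y : all (leq 1) X -> all (leq 1) Y -> all (leq 1) (nearrow X Y).
Proof.
move=> hX hY; rewrite /nearrow all_cat hX /=.
elim: Y hY => //= y Y IH /andP[h1 h2]; rewrite IH // andbT /tri; case: ifP => //; lia.
Qed.

Lemma part3 V R A B : Nhat (size V) V -> all (leq 1) R -> all (leq 1) A -> all (leq 1) B ->
  forall u : seq nat,
   Nhat (size (vjoin V R) + size (vjoin A B)) u /\
   vle (vjoin V (nearrow R (vjoin A B))) u /\
   vle u (nwarrow (vjoin V R) (vjoin A B)) <->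
   (exists t : seq nat,
      (Nhat (size R + size (vjoin A B)) t /\
       vle (nearrow R (vjoin A B)) t /\ vle t (nwarrow R (vjoin A B))) /\
      u = vjoin V t).
Proof.
move=> HV pR pA pB u; have sv := size_vjoin V R; set w := vjoin A B.
have pw : all (leq 1) w by apply: vjoin_pos.
rewrite !vleE (E4 _ _ pB); split.
- case=> HN [Hl Hu].
  have [X [c [Y [Eu [h1 [h2 [hc [h3 h4]]]]]]]] := blk_squeeze (erefl (size V)) (erefl _) Hl Hu.
  have EX := all2_anti h1 h2; subst X.
  have Ec : c = 1 by lia.
  subst c.
  have EU : u = vjoin V Y by [].
  exists Y; split => //; split; last by rewrite !vleE.
  have pY : all (leq 1) Y := all2_all h3 (nearrow_pos pR pw).
  rewrite EU in HN.
  have [_ HY] := Nhat_split HN pY.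
  have := Nhat_size HN; rewrite !size_vjoin => Hs.
  have E : size Y = size R + (size A + (size B).+1) by lia.
  by rewrite -E.
- case=> T [[HN [Hl Hu]] ->]; split; last split.
  + have := Nhat_vjoin HV HN; congr Nhat; rewrite sv; lia.
  + by rewrite /vjoin blk_le // all2_refl /= all2_shift -vleE.
  + by rewrite /vjoin blk_le // all2_refl /= all2_shift -vleE.
Qed.

Lemma part4 V R A B : Nhat (size B) B -> all (leq 1) B ->
  forall u : seq nat,
   Nhat (size (vjoin V R) + size (vjoin A B)) u /\
   vle (nearrow (vjoin V R) (vjoin A B)) u /\
   vle u (vjoin (nwarrow (vjoin V R) A) B) <->
   (exists s : seq nat,
      (Nhat (size (vjoin V R) + size A) s /\
       vle (nearrow (vjoin V R) A) s /\ vle s (nwarrow (vjoin V R) A)) /\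
      u = vjoin s B).
Proof.
move=> HB pB u; set v := vjoin V R.
have s1 : size (nearrow v A) = size v + size A by rewrite size_cat size_map.
have s2 : size (nwarrow v A) = size v + size A by rewrite size_cat size_map.
rewrite !vleE (E1 _ _ _ pB) E5; split.
- case=> HN [Hl Hu].
  have [X [c [Y [Eu [h1 [h2 [hc [h3 h4]]]]]]]] := blk_squeeze s1 s2 Hl Hu.
  have EY := all2_anti h3 h4; subst Y.
  have Ec : c = 1 by lia.
  subst c.
  have sX : size X = size v + size A by rewrite -(all2_size h1).
  have EU : u = vjoin X B by rewrite Eu /vjoin sX.
  exists X; split => //; split; last by rewrite !vleE.
  rewrite EU in HN.
  have [HX _] := Nhat_split HN pB.
  by rewrite -sX.
- case=> s [[HN [Hl Hu]] ->]; rewrite !vleE in Hl Hu.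
  have sX := Nhat_size HN.
  split; last split.
  + have := Nhat_vjoin HN HB; congr Nhat; rewrite size_vjoin; lia.
  + by rewrite /vjoin sX blk_le ?s1 // Hl /= all2_refl.
  + by rewrite /vjoin sX blk_le ?s2 // Hu /= all2_refl.
Qed.

Lemma part2 V R A B : all (leq 1) B ->
  forall u : seq nat,
   ~
   ((Nhat (size (vjoin V R) + size (vjoin A B)) u /\
     vle (vjoin V (nearrow R (vjoin A B))) u /\
     vle u (nwarrow (vjoin V R) (vjoin A B))) /\
    Nhat (size (vjoin V R) + size (vjoin A B)) u /\
    vle (nearrow (vjoin V R) (vjoin A B)) u /\
    vle u (vjoin (nwarrow (vjoin V R) A) B)).
Proof.
move=> pB u [[_ [Hl _]] [_ [_ Hu]]]; move: Hl Hu.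
rewrite !vleE (E3 _ _ _ pB) E5 => Hl Hu.
have := all2_trans Hl Hu; rewrite blk_le.
  by case/and3P => _ h _; lia.
rewrite /nwarrow /nearrow /vjoin !size_cat /= !size_map ?size_cat ?size_map; lia.
Qed.

Lemma part1 V R A B : all (leq 1) R -> all (leq 1) B ->
  forall u : seq nat,
   Nhat (size (vjoin V R) + size (vjoin A B)) u /\
   vle (nearrow (vjoin V R) (vjoin A B)) u /\
   vle u (nwarrow (vjoin V R) (vjoin A B)) <->
   Nhat (size (vjoin V R) + size (vjoin A B)) u /\
   vle (vjoin V (nearrow R (vjoin A B))) u /\
   vle u (nwarrow (vjoin V R) (vjoin A B)) \/
   Nhat (size (vjoin V R) + size (vjoin A B)) u /\
   vle (nearrow (vjoin V R) (vjoin A B)) u /\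
   vle u (vjoin (nwarrow (vjoin V R) A) B).
Proof.
move=> pR pB u; set v := vjoin V R.
have sv : size v = size V + (size R).+1 by rewrite size_vjoin.
have s1 : size (nearrow v A) = size v + size A by rewrite size_cat size_map.
have s2 : size (nwarrow v A) = size v + size A by rewrite size_cat size_map.
have s3 : size (vjoin V (nearrow R A)) = size v + size A.
  by rewrite size_vjoin size_cat size_map sv; lia.
have L1 : all2 leq (nearrow v A) (vjoin V (nearrow R A)).
  rewrite E6 /nearrow all2_cat // all2_refl /=; apply: all2_map_mono => z.
  rewrite /tri sv; case: ifP => _; lia.
rewrite !vleE (E1 _ _ _ pB) (E3 _ _ _ pB) E5 (E2 _ _ _ pB); split.
- case=> HN [Hl Hu].
  have [X [c [Y [Eu [h1 [h2 [hc [h3 h4]]]]]]]] := blk_squeeze s1 s2 Hl Hu.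
  have EY := all2_anti h3 h4; subst Y.
  have sX : size X = size v + size A by rewrite -(all2_size h1).
  case: (ltnP 1 c) => Hc; last first.
    right; split => //; split => //.
    by rewrite Eu blk_le ?s2 // h2 all2_refl /=; lia.
  left; split => //; split => //.
  rewrite Eu blk_le ?s3 // all2_refl andbT.
  have [X1 [x [EX [hv hx]]]] := all2_splitl h1.
  have sX1 : size X1 = size v by rewrite -(all2_size hv).
  move: h2; rewrite EX /nwarrow all2_cat // => /andP[hv2 _].
  have EX1 := all2_anti hv hv2; subst X1.
  have [t Et] : exists t, name t = (v ++ x) ++ c :: shift (size v + size A).+1 B.
    by case: HN => t [_ Et]; exists t; rewrite Et Eu EX.
  have sx : size x = size A by rewrite -(all2_size hx) size_map.
  have HZ : all (leq (size v + size x).+2) (shift (size v + size A).+1 B).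
    have := all_shift (size v + size A).+1 pB; rewrite sx; apply: sub_all => y; lia.
  have /andP[hxp hcp] := core Et pR Hc ltac:(lia) HZ.
  rewrite hcp andbT E6 all2_cat // all2_refl /=.
  apply: (all2_pw hx hxp) => z y; rewrite /tri sv; case: ifP => _; lia.
- case=> [[HN [Hl Hu]] | [HN [Hl Hu]]]; split => //; split => //.
  + apply: all2_trans Hl; rewrite blk_le ?s3 // L1 all2_refl andbT; lia.
  + apply: (all2_trans Hu); rewrite blk_le ?s2 // !all2_refl andbT; lia.
Qed.

Theorem mainTheorem11 (vl vr wl wr : tree) :
  let v := name (Node vl vr) in
  let w := name (Node wl wr) in
  let n := size v in
  let m := size w in
  let I  := tinterval (n + m) (nearrow v w) (nwarrow v w) in
  let I1 := tinterval (n + m) (vjoin (name vl) (nearrow (name vr) w)) (nwarrow v w) in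
  let I2 := tinterval (n + m) (nearrow v w) (vjoin (nwarrow v (name wl)) (name wr)) in
  (forall u, I u <-> I1 u \/ I2 u) /\
  (forall u, ~ (I1 u /\ I2 u)) /\
  (forall u, I1 u <->
     exists t, tinterval (size (name vr) + m) (nearrow (name vr) w) (nwarrow (name vr) w) t
               /\ u = vjoin (name vl) t) /\
  (forall u, I2 u <->
     exists s, tinterval (n + size (name wl)) (nearrow v (name wl)) (nwarrow v (name wl)) s
               /\ u = vjoin s (name wr)).
Proof.
move=> v w n m I I1 I2; rewrite /I /I1 /I2 /n /m /v /w /= /tinterval.
have HV : Nhat (size (name vl)) (name vl) by exists vl; rewrite size_name.
have HB : Nhat (size (name wr)) (name wr) by exists wr; rewrite size_name.
have pR := name_pos vr; have pA := name_pos wl; have pB := name_pos wr.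
move: (name vl) (name vr) (name wl) (name wr) HV HB pR pA pB.
clear v w n m I I1 I2 => V R A B HV HB pR pA pB.
split; first exact: part1.
split; first exact: part2.
split; first exact: part3.
exact: part4.
Qed.
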